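(* Let $A=D+N\in\mathcal{M}_n(\mathbb{H})$, where $D$ is a diagonal matrix with real entries and $N$ is a strictly upper triangular (hence nilpotent) matrix that is cycle-free. Then $W(A)$ is convex.
   Context: $\mathbb{H}$ denotes the real quaternions. The numerical range of $A\in\mathcal{M}_n(\mathbb{H})$ is $W(A)=\{\mathbf{x}^*A\mathbf{x}:\mathbf{x}\in\mathbb{H}^n,\ \mathbf{x}^*\mathbf{x}=1\}$. The graph $\mathcal{G}_N$ of $N=[a_{ij}]$ is the undirected graph on $\{1,\dots,n\}$ with an edge between $i$ and $j$ (a loop if $i=j$) whenever $a_{ij}\ne0$ or $a_{ji}\ne0$; $N$ is cycle-free if $\mathcal{G}_N$ contains no cycle. *)

(* Defs.v *)
(* Real quaternions H over a real closed field R
   (the paper's case is R = the real numbers). *)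
From HB Require Import structures.
From mathcomp Require Import all_boot all_order all_algebra.
Set Implicit Arguments. Unset Strict Implicit. Unset Printing Implicit Defensive.
Import Order.TTheory GRing.Theory Num.Theory.
Local Open Scope ring_scope.

(* quaternion q0 + q1 i + q2 j + q3 k *)
Record quat (R : Type) := Quat { q0 : R; q1 : R; q2 : R; q3 : R }.

Definition quat_to (R : Type) (q : quat R) := (q0 q, q1 q, q2 q, q3 q).
Definition quat_of (R : Type) (t : R * R * R * R) :=
  let: (a, b, c, d) := t in Quat a b c d.
Lemma quat_toK (R : Type) : cancel (@quat_to R) (@quat_of R).
Proof. by case. Qed.
HB.instance Definition _ (R : eqType) :=
  Equality.copy (quat R) (can_type (@quat_toK R)).

Section QuatOps.
Variable R : rcfType.

Definition qzero : quat R := Quat 0 0 0 0.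
Definition qreal (r : R) : quat R := Quat r 0 0 0.
Definition qadd (p q : quat R) : quat R :=
  Quat (q0 p + q0 q) (q1 p + q1 q) (q2 p + q2 q) (q3 p + q3 q).
(* Hamilton product: i^2 = j^2 = k^2 = ijk = -1 *)
Definition qmul (p q : quat R) : quat R :=
  Quat (q0 p * q0 q - q1 p * q1 q - q2 p * q2 q - q3 p * q3 q)
       (q0 p * q1 q + q1 p * q0 q + q2 p * q3 q - q3 p * q2 q)
       (q0 p * q2 q - q1 p * q3 q + q2 p * q0 q + q3 p * q1 q)
       (q0 p * q3 q + q1 p * q2 q - q2 p * q1 q + q3 p * q0 q).
Definition qconj (p : quat R) : quat R := Quat (q0 p) (- q1 p) (- q2 p) (- q3 p).
Definition qscale (t : R) (p : quat R) : quat R :=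
  Quat (t * q0 p) (t * q1 p) (t * q2 p) (t * q3 p).

Definition qdot (n : nat) (x y : 'I_n -> quat R) : quat R :=
  \big[qadd/qzero]_(i < n) qmul (qconj (x i)) (y i).
Definition qform (n : nat) (A : 'M[quat R]_n) (x : 'I_n -> quat R) : quat R :=
  \big[qadd/qzero]_(i < n) \big[qadd/qzero]_(j < n)
     qmul (qconj (x i)) (qmul (A i j) (x j)).

Definition numrange (n : nat) (A : 'M[quat R]_n) : quat R -> Prop :=
  fun q => exists x : 'I_n -> quat R, qdot x x = qreal 1 /\ qform A x = q.

Definition qconvex (S : quat R -> Prop) : Prop :=
  forall p q (t : R), S p -> S q -> 0 <= t <= 1 ->
    S (qadd (qscale (1 - t) p) (qscale t q)).

Definition mx_add (n : nat) (A B : 'M[quat R]_n) : 'M[quat R]_n :=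
  \matrix_(i, j) qadd (A i j) (B i j).

Definition real_diagonal (n : nat) (D : 'M[quat R]_n) : Prop :=
  forall i j : 'I_n, D i j = if i == j then qreal (q0 (D i i)) else qzero.

Definition strictly_upper (n : nat) (N : 'M[quat R]_n) : Prop :=
  forall i j : 'I_n, (j <= i)%N -> N i j = qzero.

Definition mx_graph (n : nat) (N : 'M[quat R]_n) : rel 'I_n :=
  fun i j => (N i j != qzero) || (N j i != qzero).

Definition cycle_free (n : nat) (N : 'M[quat R]_n) : Prop :=
  (forall i, ~~ mx_graph N i i) /\
  (forall s : seq 'I_n, uniq s -> (3 <= size s)%N -> ~~ cycle (mx_graph N) s).

End QuatOps.

(* Main.v *)
Require Import Defs.
From HB Require Import structures.
From mathcomp Require Import all_boot all_order all_algebra.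
From mathcomp Require Import ring lra zify complex.
Set Implicit Arguments. Unset Strict Implicit. Unset Printing Implicit Defensive.
Import Order.TTheory GRing.Theory Num.Theory.
Local Open Scope ring_scope.

Section QBasic.
Variable R : rcfType.
Implicit Types p q r g : quat R.
Local Notation Q0 := (qzero R).

Lemma quatP p q : q0 p = q0 q -> q1 p = q1 q -> q2 p = q2 q -> q3 p = q3 q -> p = q.
Proof. by case: p; case: q => /= ? ? ? ? ? ? ? ? -> -> -> ->. Qed.

Ltac qsolve := repeat match goal with p : quat R |- _ => destruct p end;
  apply: quatP => /=; ring.

Lemma qmulA p q r : qmul p (qmul q r) = qmul (qmul p q) r. Proof. qsolve. Qed.
Lemma qconj_mul p q : qconj (qmul p q) = qmul (qconj q) (qconj p). Proof. qsolve. Qed.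
Lemma qconjK p : qconj (qconj p) = p. Proof. qsolve. Qed.
Lemma qaddA p q r : qadd p (qadd q r) = qadd (qadd p q) r. Proof. qsolve. Qed.
Lemma qaddC p q : qadd p q = qadd q p. Proof. qsolve. Qed.
Lemma qadd0 p : qadd Q0 p = p. Proof. qsolve. Qed.
Lemma qmulDl p q r : qmul (qadd p q) r = qadd (qmul p r) (qmul q r). Proof. qsolve. Qed.
Lemma qmulDr p q r : qmul r (qadd p q) = qadd (qmul r p) (qmul r q). Proof. qsolve. Qed.
Lemma qmul0 p : qmul p Q0 = Q0. Proof. qsolve. Qed.
Lemma qmul0l p : qmul Q0 p = Q0. Proof. qsolve. Qed.
Lemma qconj_add p q : qconj (qadd p q) = qadd (qconj p) (qconj q). Proof. qsolve. Qed.
Lemma qmul1 p : qmul p (qreal 1) = p. Proof. qsolve. Qed.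
Lemma qmul1l p : qmul (qreal 1) p = p. Proof. qsolve. Qed.

HB.instance Definition _ := Monoid.isComLaw.Build (quat R) Q0 (@qadd R) qaddA qaddC qadd0.

Definition nq p := q0 p ^+ 2 + q1 p ^+ 2 + q2 p ^+ 2 + q3 p ^+ 2.
Lemma nq_ge0 p : 0 <= nq p.
Proof. rewrite /nq; case: p => a b c d /=; nra. Qed.
Lemma nq_eq0 p : nq p = 0 -> p = Q0.
Proof.
rewrite /nq; case: p => a b c d /= h.
have ha : a = 0 by nra. have hb : b = 0 by nra.
have hc : c = 0 by nra. have hd : d = 0 by nra.
by rewrite ha hb hc hd.
Qed.
Lemma nq_conj p : nq (qconj p) = nq p.
Proof. rewrite /nq /=; ring. Qed.
Lemma nq_mul p q : nq (qmul p q) = nq p * nq q.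
Proof. rewrite /nq; case: p; case: q => /= *; ring. Qed.
Lemma qconjM_nq p : qmul (qconj p) p = qreal (nq p). Proof. rewrite /nq; qsolve. Qed.
Lemma qmulC_nq p : qmul p (qconj p) = qreal (nq p). Proof. rewrite /nq; qsolve. Qed.

Definition qsum n (F : 'I_n -> quat R) := \big[@qadd R/Q0]_(i < n) F i.

Lemma qsum_morph n (f : quat R -> quat R) (F : 'I_n -> quat R) :
  (forall p q, f (qadd p q) = qadd (f p) (f q)) -> f Q0 = Q0 ->
  f (\big[@qadd R/Q0]_(i < n) F i) = \big[@qadd R/Q0]_(i < n) f (F i).
Proof. move=> hD h0; exact: (big_morph f hD h0). Qed.

Lemma sum_q0 n (F : 'I_n -> quat R) :
  q0 (\big[@qadd R/Q0]_(i < n) F i) = \sum_(i < n) q0 (F i).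
Proof. exact: (big_morph (@q0 R) (fun p q => erefl) erefl). Qed.
Lemma sum_q1 n (F : 'I_n -> quat R) :
  q1 (\big[@qadd R/Q0]_(i < n) F i) = \sum_(i < n) q1 (F i).
Proof. exact: (big_morph (@q1 R) (fun p q => erefl) erefl). Qed.
Lemma sum_q2 n (F : 'I_n -> quat R) :
  q2 (\big[@qadd R/Q0]_(i < n) F i) = \sum_(i < n) q2 (F i).
Proof. exact: (big_morph (@q2 R) (fun p q => erefl) erefl). Qed.
Lemma sum_q3 n (F : 'I_n -> quat R) :
  q3 (\big[@qadd R/Q0]_(i < n) F i) = \sum_(i < n) q3 (F i).
Proof. exact: (big_morph (@q3 R) (fun p q => erefl) erefl). Qed.

Lemma W_hom n (A : 'M[quat R]_n) (x : 'I_n -> quat R) (c : R) T :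
  0 < c -> qdot x x = qreal c -> qform A x = qscale c T -> numrange A T.
Proof.
move=> c0 hx hA.
set k := (Num.sqrt c)^-1.
have kk : k * k * c = 1.
  rewrite /k -invrM ?unitfE ?sqrtr_eq0 -?ltNge // -expr2 sqr_sqrtr ?ltW //.
  by rewrite mulVf // gt_eqF.
exists (fun i => qmul (x i) (qreal k)); split.
- have -> : qdot (fun i => qmul (x i) (qreal k)) (fun i => qmul (x i) (qreal k))
     = qscale (k * k) (qdot x x).
    rewrite /qdot (qsum_morph (f := qscale (k * k))); first last.
    + by apply: quatP => /=; ring.
    + by move=> p q; apply: quatP => /=; ring.
    by apply: eq_bigr => i _; qsolve.
  by rewrite hx; apply: quatP => /=; rewrite ?mulr0 //; lra.
- have -> : qform A (fun i => qmul (x i) (qreal k)) = qscale (k * k) (qform A x).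
    rewrite /qform (qsum_morph (f := qscale (k * k))); first last.
    + by apply: quatP => /=; ring.
    + by move=> p q; apply: quatP => /=; ring.
    apply: eq_bigr => i _.
    rewrite (qsum_morph (f := qscale (k * k))); first last.
    + by apply: quatP => /=; ring.
    + by move=> p q; apply: quatP => /=; ring.
    by apply: eq_bigr => j _; qsolve.
  rewrite hA; apply: quatP => /=; rewrite !mulrA kk ?mul1r //.
Qed.

Lemma W_rmul n (A : 'M[quat R]_n) T g :
  numrange A T -> 0 < nq g ->
  numrange A (qscale (nq g)^-1 (qmul (qconj g) (qmul T g))).
Proof.
move=> [x [hx hA]] hg.
set f := fun s => qmul (qconj g) (qmul s g).
have fD : forall p q, f (qadd p q) = qadd (f p) (f q) by move=> *; rewrite /f; qsolve.
have f0 : f Q0 = Q0 by rewrite /f; qsolve.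
apply: (@W_hom _ A (fun i => qmul (x i) g) (nq g)) => //.
- have -> : qdot (fun i => qmul (x i) g) (fun i => qmul (x i) g) = f (qdot x x).
    rewrite /qdot qsum_morph //; apply: eq_bigr => i _; rewrite /f; qsolve.
  by rewrite hx /f qmul1l qconjM_nq.
- have -> : qform A (fun i => qmul (x i) g) = f (qform A x).
    rewrite /qform qsum_morph //; apply: eq_bigr => i _.
    rewrite qsum_morph //; apply: eq_bigr => j _; rewrite /f; qsolve.
  rewrite hA /f; apply: quatP => /=; rewrite !mulrA mulfV ?mul1r // gt_eqF //.
Qed.

Definition mI (p : quat R) := Num.sqrt (q1 p ^+ 2 + q2 p ^+ 2 + q3 p ^+ 2).
Definition hat (p : quat R) := Quat (q0 p) (mI p) 0 0.

Lemma mI_ge0 p : 0 <= mI p. Proof. exact: sqrtr_ge0. Qed.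
Lemma mI_sq p : mI p ^+ 2 = q1 p ^+ 2 + q2 p ^+ 2 + q3 p ^+ 2.
Proof. by rewrite sqr_sqrtr //; nra. Qed.

Lemma complexify T : exists g, 0 < nq g /\
  qmul (qconj g) (qmul T g) = qscale (nq g) (hat T).
Proof.
case: T => a b c d; set m := mI (Quat a b c d).
have hm : m ^+ 2 = b ^+ 2 + c ^+ 2 + d ^+ 2 by rewrite /m mI_sq.
have m0 : 0 <= m by exact: mI_ge0.
set g := Quat 0 (b + m) c d.
have [gz|gnz] := eqVneq (nq g) 0.
  have hb : b + m = 0 by move: gz; rewrite /nq /=; nra.
  have hc : c = 0 by move: gz; rewrite /nq /=; nra.
  have hd : d = 0 by move: gz; rewrite /nq /=; nra.
  exists (Quat 0 0 1 0); split; first by rewrite /nq /=; lra.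
  rewrite /hat -/m; apply: quatP; rewrite /nq /= hc hd; lra.
exists g; split; first by rewrite lt_neqAle eq_sym gnz nq_ge0.
have hv : qmul (Quat 0 b c d) g = qmul g (Quat 0 m 0 0).
  by apply: quatP => /=; lra.
have -> : qmul (Quat a b c d) g = qadd (qmul (qreal a) g) (qmul g (Quat 0 m 0 0)).
  by rewrite -hv; apply: quatP => /=; ring.
rewrite /hat -/m /nq /g; apply: quatP => /=; ring.
Qed.

End QBasic.

Section Cplx.
Local Open Scope complex_scope.
Variable R : rcfType.
Local Notation C := (R[i]).
Local Notation cj := (@conjc R).
Local Notation Re := (@complex.Re R).
Local Notation Im := (@complex.Im R).
Implicit Types z w : C.

Lemma cP z w : Re z = Re w -> Im z = Im w -> z = w.
Proof. by case: z => a b; case: w => c d /= -> ->. Qed.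
Lemma cReD z w : Re (z + w) = Re z + Re w. Proof. by case: z; case: w. Qed.
Lemma cImD z w : Im (z + w) = Im z + Im w. Proof. by case: z; case: w. Qed.
Lemma cReM z w : Re (z * w) = Re z * Re w - Im z * Im w. Proof. by case: z; case: w. Qed.
Lemma cImM z w : Im (z * w) = Re z * Im w + Im z * Re w. Proof. by case: z; case: w. Qed.
Lemma cReN z : Re (- z) = - Re z. Proof. by case: z. Qed.
Lemma cImN z : Im (- z) = - Im z. Proof. by case: z. Qed.
Lemma cReJ z : Re (cj z) = Re z. Proof. by case: z. Qed.
Lemma cImJ z : Im (cj z) = - Im z. Proof. by case: z. Qed.
Lemma cReR (r : R) : Re (r%:C) = r. Proof. by []. Qed.
Lemma cImR (r : R) : Im (r%:C) = 0. Proof. by []. Qed.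
Lemma cRe1 : Re (1 : C) = 1. Proof. by []. Qed.
Lemma cIm1 : Im (1 : C) = 0. Proof. by []. Qed.
Lemma cRe0 : Re (0 : C) = 0. Proof. by []. Qed.
Lemma cIm0 : Im (0 : C) = 0. Proof. by []. Qed.
Lemma cjR (r : R) : cj (r%:C) = r%:C. Proof. by rewrite /= oppr0. Qed.
Lemma cjK z : cj (cj z) = z. Proof. exact: conjcK. Qed.

Lemma sum_Re n (F : 'I_n -> C) : Re (\sum_(i < n) F i) = \sum_(i < n) Re (F i).
Proof. exact: (big_morph Re cReD cRe0). Qed.
Lemma sum_Im n (F : 'I_n -> C) : Im (\sum_(i < n) F i) = \sum_(i < n) Im (F i).
Proof. exact: (big_morph Im cImD cIm0). Qed.

Ltac csimp := rewrite ?(cReD, cImD, cReM, cImM, cReN, cImN, cReJ, cImJ, cReR, cImR, cRe1, cIm1, cRe0, cIm0).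

Lemma cjM_re z : cj z * z = (Re z ^+ 2 + Im z ^+ 2)%:C.
Proof. apply: cP; csimp; ring. Qed.


Lemma cRD (a b : R) : (a + b)%:C = a%:C + b%:C :> C. Proof. by apply: cP; csimp; ring. Qed.
Lemma cRM (a b : R) : (a * b)%:C = a%:C * b%:C :> C. Proof. by apply: cP; csimp; ring. Qed.
Lemma cRB (a b : R) : (a - b)%:C = a%:C - b%:C :> C. Proof. by apply: cP; csimp; ring. Qed.
Lemma cRN (a : R) : (- a)%:C = - a%:C :> C. Proof. by apply: cP; csimp; ring. Qed.
Lemma cR1 : (1 : R)%:C = 1 :> C. Proof. by []. Qed.
Lemma cR0 : (0 : R)%:C = 0 :> C. Proof. by []. Qed.
Lemma cRX (a : R) : (a ^+ 2)%:C = a%:C ^+ 2 :> C. Proof. by rewrite !expr2 cRM. Qed.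
Lemma cjD z w : cj (z + w) = cj z + cj w. Proof. by apply: cP; csimp; ring. Qed.
Lemma cjMl z w : cj (z * w) = cj z * cj w. Proof. by apply: cP; csimp; ring. Qed.
Lemma cjN z : cj (- z) = - cj z. Proof. by apply: cP; csimp; ring. Qed.
Lemma cjB z w : cj (z - w) = cj z - cj w. Proof. by rewrite cjD cjN. Qed.
Lemma cj_sum n (F : 'I_n -> C) : cj (\sum_(i < n) F i) = \sum_(i < n) cj (F i).
Proof. apply: (big_morph cj cjD); apply: cP; csimp; ring. Qed.
Lemma cReal z : Im z = 0 -> z = (Re z)%:C. Proof. by move=> h; apply: cP; csimp. Qed.
Lemma Im_cjz_z z : Im (cj z * z) = 0. Proof. csimp; ring. Qed.
Lemma Re_cjz_z z : Re (cj z * z) = Re z ^+ 2 + Im z ^+ 2. Proof. csimp; ring. Qed.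

Section Forms.
Variable n : nat.
Implicit Types x y : 'I_n -> C.
Definition Nc x y : C := \sum_(i < n) cj (x i) * y i.
Definition Fc (M : 'I_n -> 'I_n -> C) x y : C :=
  \sum_(i < n) \sum_(j < n) cj (x i) * M i j * y j.
Definition WC M (zeta : C) := exists x, Nc x x = 1 /\ Fc M x x = zeta.

Lemma Fc_lin M a x b y :
  Fc M (fun i => a * x i + b * y i) (fun i => a * x i + b * y i) =
  cj a * a * Fc M x x + cj a * b * Fc M x y + cj b * a * Fc M y x + cj b * b * Fc M y y.
Proof.
rewrite /Fc.
transitivity (\sum_(i < n) (cj a * a * \sum_(j < n) cj (x i) * M i j * x j
  + cj a * b * \sum_(j < n) cj (x i) * M i j * y j
  + cj b * a * \sum_(j < n) cj (y i) * M i j * x j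
  + cj b * b * \sum_(j < n) cj (y i) * M i j * y j)).
  apply: eq_bigr => i _; rewrite !mulr_sumr -!big_split /=.
  by apply: eq_bigr => j _; rewrite cjD !cjMl; ring.
by rewrite !big_split /= -!mulr_sumr.
Qed.

Lemma Nc_lin a x b y :
  Nc (fun i => a * x i + b * y i) (fun i => a * x i + b * y i) =
  cj a * a * Nc x x + cj a * b * Nc x y + cj b * a * Nc y x + cj b * b * Nc y y.
Proof.
rewrite /Nc !mulr_sumr -!big_split /=.
by apply: eq_bigr => i _; rewrite cjD !cjMl; ring.
Qed.

Lemma Fc_scale M c x :
  Fc M (fun i => c * x i) (fun i => c * x i) = cj c * c * Fc M x x.
Proof.
rewrite /Fc mulr_sumr; apply: eq_bigr => i _; rewrite mulr_sumr.
by apply: eq_bigr => j _; rewrite cjMl; ring.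
Qed.

Lemma Nc_scale c x : Nc (fun i => c * x i) (fun i => c * x i) = cj c * c * Nc x x.
Proof. rewrite /Nc mulr_sumr; apply: eq_bigr => i _; rewrite cjMl; ring. Qed.

Lemma Nc_herm x y : cj (Nc x y) = Nc y x.
Proof. rewrite /Nc cj_sum; apply: eq_bigr => i _; rewrite cjMl cjK mulrC //. Qed.

Lemma Nc_real x : Im (Nc x x) = 0.
Proof. rewrite /Nc sum_Im big1 // => i _; exact: Im_cjz_z. Qed.

Lemma Nc_ge0 x : 0 <= Re (Nc x x).
Proof.
rewrite /Nc sum_Re; apply: sumr_ge0 => i _; rewrite Re_cjz_z.
by rewrite addr_ge0 // sqr_ge0.
Qed.

Lemma Nc_eq0 x : Re (Nc x x) = 0 -> forall i, x i = 0.
Proof.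
rewrite /Nc sum_Re => /eqP; rewrite psumr_eq0 => [/allP h i|i _].
  have := h i (mem_index_enum i); rewrite implyTb Re_cjz_z => /eqP e.
  by apply: cP; csimp; nra.
by rewrite Re_cjz_z addr_ge0 // sqr_ge0.
Qed.

Lemma WC_hom M x (c : R) zeta :
  0 < c -> Nc x x = c%:C -> Fc M x x = c%:C * zeta -> WC M zeta.
Proof.
move=> c0 hN hF.
set k := (Num.sqrt c)^-1.
have kk : k * k * c = 1.
  rewrite /k -invrM ?unitfE ?sqrtr_eq0 -?ltNge // -expr2 sqr_sqrtr ?ltW //.
  by rewrite mulVf // gt_eqF.
have kkC : cj k%:C * k%:C * c%:C = 1 by rewrite cjR -!cRM kk.
exists (fun i => k%:C * x i); split.
  by rewrite Nc_scale hN.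
by rewrite Fc_scale hF mulrA kkC mul1r.
Qed.

Lemma WC_conj M zeta : (forall i j, cj (M i j) = M i j) -> WC M zeta -> WC M (cj zeta).
Proof.
move=> hM [x [hx hF]]; exists (fun i => cj (x i)); split.
  by rewrite -hx /Nc; apply: eq_bigr => i _; rewrite cjK mulrC.
rewrite -hF /Fc cj_sum; apply: eq_bigr => i _; rewrite cj_sum; apply: eq_bigr => j _.
by rewrite !cjMl hM cjK.
Qed.


Lemma TH M x y (t : R) : Nc x x = 1 -> Nc y y = 1 -> 0 <= t -> t <= 1 ->
  WC M ((1 - t)%:C * Fc M x x + t%:C * Fc M y y).
Proof.
move=> hx hy t0 t1.
set P := Fc M x x; set Q := Fc M y y.
have [PQ|PQ] := eqVneq P Q.
  by exists x; split => //; rewrite -PQ -/P cRB cR1; ring.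
set al := Q - P.
have al0 : al != 0 by rewrite subr_eq0 eq_sym.
set be := (Fc M x y - P * Nc x y) / al.
set ga := (Fc M y x - P * Nc y x) / al.
have h1 : al * be = Fc M x y - P * Nc x y by rewrite /be mulrC divfK.
have h2 : al * ga = Fc M y x - P * Nc y x by rewrite /ga mulrC divfK.
have eF1 : Fc M x y = P * Nc x y + al * be by rewrite h1; ring.
have eF2 : Fc M y x = P * Nc y x + al * ga by rewrite h2; ring.
set de := be - cj ga.
pose w := if de == 0 then 1 else cj de.
have w0 : w != 0.
  rewrite /w; case: ifP => [_|/negbT dn]; first exact: oner_neq0.
  by apply: contraNneq dn => h; apply/eqP; rewrite -[de]cjK h; apply: cP; csimp; ring.
have wde : Im (w * de) = 0.
  rewrite /w; case: ifP => [/eqP ->|_]; first by csimp; ring.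
  exact: Im_cjz_z.
set ka := w * be + cj w * ga.
have ka_im : Im ka = 0.
  by move: wde; rewrite /ka /de; csimp => h; lra.
have kaC : ka = (Re ka)%:C by apply: cReal.
set kr := Re ka.
set sg := w * Nc x y + cj w * Nc y x.
have sgC : sg = (Re sg)%:C by apply: cReal; rewrite /sg -Nc_herm; csimp; ring.
set sr := Re sg.
set wr := Re (cj w * w).
have ww : cj w * w = wr%:C by rewrite /wr -cReal // Im_cjz_z.
have wr0 : 0 < wr.
  have wrn : wr != 0.
    apply: contraNneq w0 => h; move: h; rewrite /wr Re_cjz_z => h.
    by apply/eqP; apply: cP; csimp; nra.
  by rewrite lt_def wrn /wr Re_cjz_z addr_ge0 // sqr_ge0.
pose z (s : R) := fun i => (1 - s)%:C * x i + (s%:C * w) * y i.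
have eN s : Nc (z s) (z s) = ((1 - s) ^+ 2 + s ^+ 2 * wr + s * (1 - s) * sr)%:C.
  rewrite /z Nc_lin hx hy !cjMl !cjR !(cRD, cRM, cRX, cRB, cR1) -ww.
  by rewrite -/sr -sgC /sg; ring.
have eF s : Fc M (z s) (z s) - P * Nc (z s) (z s) =
    al * (s ^+ 2 * wr + s * (1 - s) * kr)%:C.
  have eQ : Q = P + al by rewrite /al; ring.
  rewrite /z Fc_lin Nc_lin hx hy eF1 eF2 -/P -/Q eQ !cjMl !cjR.
  by rewrite !(cRD, cRM, cRX, cRB, cR1) -ww -/kr -kaC /ka; ring.
pose hp : {poly R} := 'X^2 * wr%:P + 'X * (1 - 'X) * kr%:P
   - t%:P * ((1 - 'X) ^+ 2 + 'X^2 * wr%:P + 'X * (1 - 'X) * sr%:P).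
have hpE s : hp.[s] = s ^+ 2 * wr + s * (1 - s) * kr
   - t * ((1 - s) ^+ 2 + s ^+ 2 * wr + s * (1 - s) * sr).
  by rewrite /hp !hornerE.
have [s0 /andP [s00 s01] s0root] : exists2 s : R, 0 <= s <= 1 & root hp s.
  apply: Num.Theory.poly_ivt; first exact: ler01.
  have -> : hp.[0] = - t by rewrite hpE; ring.
  have -> : hp.[1] = (1 - t) * wr by rewrite hpE; ring.
  by apply/andP; split; nra.
have hroot : hp.[s0] = 0 by apply/eqP.
set nn := (1 - s0) ^+ 2 + s0 ^+ 2 * wr + s0 * (1 - s0) * sr.
have nn0 : 0 <= nn by have := Nc_ge0 (z s0); rewrite eN cReR.
have [nz|nnz] := eqVneq nn 0.
  exfalso.
  have zi : forall i, z s0 i = 0 by apply: Nc_eq0; rewrite eN -/nn nz.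
  have [s0z|s0nz] := eqVneq s0 0.
    have : Nc x x = 0.
      rewrite /Nc big1 // => i _; have := zi i; rewrite /z s0z subr0 cR1 cR0 mul1r.
      by rewrite !mul0r addr0 => ->; rewrite mulr0.

    by rewrite hx => /eqP; rewrite oner_eq0.
  have s0C : s0%:C != 0.
    by apply: contraNneq s0nz => h; apply/eqP; have := congr1 Re h; rewrite cReR.
  have sw0 : s0%:C * w != 0 by rewrite mulf_neq0.
  set c := - (1 - s0)%:C / (s0%:C * w).
  have yi : forall i, y i = c * x i.
    move=> i; have := zi i; rewrite /z => /eqP; rewrite addr_eq0 => /eqP e.
    apply: (mulfI sw0).
    have -> : s0%:C * w * (c * x i) = - (1 - s0)%:C * x i.
      by rewrite /c mulrA (mulrC (s0%:C * w)) divfK.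
    by rewrite mulNr e opprK.
  have eNy : Nc y y = cj c * c * Nc x x.
    by rewrite -Nc_scale; apply: eq_bigr => i _; rewrite yi.
  have eFy : Q = cj c * c * P.
    rewrite /Q /P -Fc_scale /Fc; apply: eq_bigr => i _; apply: eq_bigr => j _.
    by rewrite !yi.
  move: eNy; rewrite hx hy mulr1 => cc.
  by move: PQ; rewrite eFy -cc mul1r eqxx.
have nnp : 0 < nn by rewrite lt_def nnz nn0.
apply: (@WC_hom M (z s0) nn) => //.
have eF0 := eF s0.
have hk : s0 ^+ 2 * wr + s0 * (1 - s0) * kr = t * nn.
  by move: hroot; rewrite hpE /nn => h; lra.
rewrite hk eN -/nn in eF0.
move/eqP: eF0; rewrite subr_eq => /eqP ->.
rewrite cRM cRB cR1 /al; ring.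
Qed.
End Forms.
End Cplx.

Section Real.
Local Open Scope complex_scope.
Variable R : rcfType.
Local Notation C := (R[i]).
Local Notation cj := (@conjc R).
Local Notation Re := (@complex.Re R).
Local Notation Im := (@complex.Im R).
Local Notation Q0 := (qzero R).
Ltac csimp := rewrite ?(cReD, cImD, cReM, cImM, cReN, cImN, cReJ, cImJ, cReR, cImR, cRe1, cIm1, cRe0, cIm0).

Definition emb (z : C) : quat R := Quat (Re z) (Im z) 0 0.
Lemma embD z w : emb (z + w) = qadd (emb z) (emb w).
Proof. by apply: quatP => /=; csimp; rewrite ?addr0. Qed.
Lemma emb0 : emb 0 = Q0. Proof. by []. Qed.

Lemma WC_convex n (M : 'I_n -> 'I_n -> C) z1 z2 (t : R) :
  WC M z1 -> WC M z2 -> 0 <= t -> t <= 1 -> WC M ((1 - t)%:C * z1 + t%:C * z2).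
Proof. by move=> [x [hx <-]] [y [hy <-]]; apply: TH. Qed.

Variable n : nat.
Variable B : 'M[quat R]_n.
Hypothesis breal : forall i j, B i j = qreal (q0 (B i j)).
Definition Mc := fun i j : 'I_n => (q0 (B i j))%:C.

Lemma qform_emb (x : 'I_n -> C) : qform B (fun i => emb (x i)) = emb (Fc Mc x x).
Proof.
rewrite /qform /Fc (big_morph emb embD emb0); apply: eq_bigr => i _.
rewrite (big_morph emb embD emb0); apply: eq_bigr => j _.
rewrite breal /Mc; apply: quatP => /=; csimp; ring.
Qed.

Lemma qdot_emb (x : 'I_n -> C) : qdot (fun i => emb (x i)) (fun i => emb (x i)) = emb (Nc x x).
Proof.
rewrite /qdot /Nc (big_morph emb embD emb0); apply: eq_bigr => i _.
apply: quatP => /=; csimp; ring.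
Qed.

Lemma W_of_WC z : WC Mc z -> numrange B (emb z).
Proof.
move=> [x [hx hF]]; exists (fun i => emb (x i)); split.
  by rewrite qdot_emb hx.
by rewrite qform_emb hF.
Qed.

Lemma WC_of_W p : numrange B p -> q2 p = 0 -> q3 p = 0 ->
  WC Mc (Complex (q0 p) (q1 p)).
Proof.
move=> [x [hx hp]] p2 p3.
pose a i := Complex (q0 (x i)) (q1 (x i)).
pose e i := Complex (q2 (x i)) (- q3 (x i)).
have eN : Nc a a + Nc e e = 1.
  apply: cP; last by csimp; rewrite !Nc_real; ring.
  have h1 : q0 (qdot x x) = 1 by rewrite hx.
  rewrite cReD cRe1 -h1 /qdot sum_q0 /Nc !sum_Re -big_split.
  by apply: eq_bigr => i _ /=; csimp; ring.
have eF : Fc Mc a a + Fc Mc e e = Complex (q0 p) (q1 p).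
  apply: cP => /=; rewrite -hp /qform ?sum_q0 ?sum_q1 /Fc; csimp;
    rewrite !(sum_Re, sum_Im) -big_split; apply: eq_bigr => i _ /=;
    rewrite ?(sum_q0, sum_q1) !(sum_Re, sum_Im) -big_split; apply: eq_bigr => j _ /=;
    rewrite breal /Mc /=; csimp; ring.
have aC : Nc a a = (Re (Nc a a))%:C by apply: cReal; exact: Nc_real.
have eC : Nc e e = (Re (Nc e e))%:C by apply: cReal; exact: Nc_real.
set al := Re (Nc a a) in aC; set be := Re (Nc e e) in eC.
have al0 : 0 <= al := Nc_ge0 a. have be0 : 0 <= be := Nc_ge0 e.
have albe : al + be = 1 by have := congr1 Re eN; rewrite cReD aC eC.
have [az|anz] := eqVneq al 0.
  have ha : forall i, a i = 0 by apply: Nc_eq0.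
  have Fa : Fc Mc a a = 0.
    by rewrite /Fc big1 // => i _; rewrite big1 // => j _; rewrite ha; ring.
  exists e; split; first by rewrite eC; apply: cP => /=; lra.
  by rewrite -eF Fa add0r.
have [bz|bnz] := eqVneq be 0.
  have he : forall i, e i = 0 by apply: Nc_eq0.
  have Fe : Fc Mc e e = 0.
    by rewrite /Fc big1 // => i _; rewrite big1 // => j _; rewrite he; ring.
  exists a; split; first by rewrite aC; apply: cP => /=; lra.
  by rewrite -eF Fe addr0.
have alp : 0 < al by rewrite lt_def anz al0.
have bep : 0 < be by rewrite lt_def bnz be0.
have alC : al%:C != 0 by apply: contraNneq anz => h; apply/eqP; have := congr1 Re h.
have beC : be%:C != 0 by apply: contraNneq bnz => h; apply/eqP; have := congr1 Re h.
have Wa : WC Mc (Fc Mc a a / al%:C).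
  by apply: (WC_hom (x := a) (c := al)) => //; rewrite mulrC divfK.
have We : WC Mc (Fc Mc e e / be%:C).
  by apply: (WC_hom (x := e) (c := be)) => //; rewrite mulrC divfK.
have := WC_convex Wa We be0 (_ : be <= 1); rewrite -eF.
have -> : (1 - be) = al by lra.
rewrite (mulrC al%:C) (mulrC be%:C) !divfK //; apply; lra.
Qed.


Ltac qsolve := repeat match goal with p : quat R |- _ => destruct p end;
  apply: quatP => /=; ring.

Lemma W_hat p : numrange B p -> numrange B (hat p).
Proof.
move=> hp; have [g [g0 hg]] := complexify p.
have := W_rmul hp g0; rewrite hg.
have -> // : qscale (nq g)^-1 (qscale (nq g) (hat p)) = hat p.
by apply: quatP => /=; rewrite mulrA mulVf ?mul1r // gt_eqF.
Qed.

Lemma W_of_hat p : numrange B (hat p) -> numrange B p.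
Proof.
move=> hp; have [g [g0 hg]] := complexify p.
have g0' : 0 < nq (qconj g) by rewrite nq_conj.
have := W_rmul hp g0'; rewrite qconjK nq_conj.
set k := nq g.
have hh : hat p = qscale k^-1 (qmul (qconj g) (qmul p g)).
  by rewrite hg; apply: quatP => /=; rewrite mulrA mulVf ?mul1r // gt_eqF.
rewrite hh.
have id1 : forall X Y : quat R, qmul g (qmul (qscale k^-1 X) Y) = qscale k^-1 (qmul g (qmul X Y)).
  by move=> X Y; qsolve.
have id2 : qmul g (qmul (qmul (qconj g) (qmul p g)) (qconj g)) = qscale (k * k) p.
  by rewrite /k /nq; qsolve.
rewrite id1 id2.
have -> // : qscale k^-1 (qscale k^-1 (qscale (k * k) p)) = p.
have kk : k^-1 * (k^-1 * (k * k)) = 1.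
  by rewrite mulrA -invrM ?unitfE ?gt_eqF // mulVf // mulf_neq0 // gt_eqF.
by apply: quatP => /=; rewrite !mulrA -[k^-1 * k^-1 * k * k]mulrA -[k^-1 * k^-1 * (k * k)]mulrA kk mul1r.
Qed.

Lemma mI_tri p q (a b : R) : 0 <= a -> 0 <= b ->
  mI (qadd (qscale a p) (qscale b q)) <= a * mI p + b * mI q /\
  a * mI p - b * mI q <= mI (qadd (qscale a p) (qscale b q)).
Proof.
move=> a0 b0.
set X := mI _.
have hX := mI_sq (qadd (qscale a p) (qscale b q)); rewrite -/X /= in hX.
have hA := mI_sq p; have hB := mI_sq q.
have X0 : 0 <= X := mI_ge0 _. have A0 := mI_ge0 p. have B0 := mI_ge0 q.
set A := mI p in hA A0 *; set Bq := mI q in hB B0 *.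
set dot := q1 p * q1 q + q2 p * q2 q + q3 p * q3 q.
have lag : dot ^+ 2 <= (A * Bq) ^+ 2.
  have -> : (A * Bq) ^+ 2 = A ^+ 2 * Bq ^+ 2 by ring.
  rewrite hA hB /dot.
  have : 0 <= (q2 p * q3 q - q3 p * q2 q) ^+ 2 + (q3 p * q1 q - q1 p * q3 q) ^+ 2
       + (q1 p * q2 q - q2 p * q1 q) ^+ 2 by rewrite !addr_ge0 // sqr_ge0.
  move=> h; nra.
have AB0 : 0 <= A * Bq by rewrite mulr_ge0.
have d1 : dot <= A * Bq by nra.
have d2 : - dot <= A * Bq by nra.
have eX : X ^+ 2 = a ^+ 2 * A ^+ 2 + b ^+ 2 * Bq ^+ 2 + 2 * a * b * dot.
  by rewrite hX hA hB /dot; ring.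
have abd1 : a * b * dot <= a * b * (A * Bq) by rewrite ler_wpM2l // mulr_ge0.
have abd2 : - (a * b * dot) <= a * b * (A * Bq).
  by rewrite -mulrN ler_wpM2l // mulr_ge0.
split.
  have aAbB : 0 <= a * A + b * Bq by rewrite addr_ge0 // mulr_ge0.
  have : X ^+ 2 <= (a * A + b * Bq) ^+ 2 by rewrite eX; nra.
  by move=> h; nra.
have : (a * A - b * Bq) ^+ 2 <= X ^+ 2 by rewrite eX; nra.
by move=> h; nra.
Qed.

Lemma W_real_convex : qconvex (numrange B).
Proof.
move=> p q t hp hq /andP [t0 t1].
set T := qadd (qscale (1 - t) p) (qscale t q).
apply: W_of_hat.
have Wp : WC Mc (Complex (q0 p) (mI p)) := WC_of_W (W_hat hp) erefl erefl.
have Wq : WC Mc (Complex (q0 q) (mI q)) := WC_of_W (W_hat hq) erefl erefl.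
have Wq' := WC_conj (fun i j => cjR _) Wq.
have Wplus := WC_convex Wp Wq t0 t1.
have Wminus := WC_convex Wp Wq' t0 t1.
have t10 : 0 <= 1 - t by lra.
have [hU hL] := mI_tri p q t10 t0.
rewrite -/T in hU hL.
set U := (1 - t) * mI p + t * mI q in hU *.
set L := (1 - t) * mI p - t * mI q in hL *.
have qT : q0 T = (1 - t) * q0 p + t * q0 q by [].
suff target : WC Mc (Complex (q0 T) (mI T)) by exact: (W_of_WC target).
have mq0 := mI_ge0 q.
have [UL|UL] := eqVneq U L.
  have -> : Complex (q0 T) (mI T) =
     (1 - t)%:C * Complex (q0 p) (mI p) + t%:C * Complex (q0 q) (mI q).
    by apply: cP; rewrite /= ?mul0r ?subr0 ?addr0 ?mulr0 ?add0r; rewrite /U /L in UL hU hL *; lra.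
  exact: Wplus.
have ULp : 0 < U - L.
  by rewrite subr_gt0 lt_def UL /U /L; nra.
set la := (mI T - L) / (U - L).
have hla : la * (U - L) = mI T - L by rewrite /la divfK // gt_eqF.
have la1 : la <= 1.
  by rewrite /la ler_pdivrMr // mul1r lerD2r.
have la0 : 0 <= la by apply: divr_ge0; [rewrite subr_ge0 | exact: ltW].
have := WC_convex Wminus Wplus la0 la1.
have -> // : Complex (q0 T) (mI T) =
   (1 - la)%:C * ((1 - t)%:C * Complex (q0 p) (mI p) + t%:C * cj (Complex (q0 q) (mI q)))
   + la%:C * ((1 - t)%:C * Complex (q0 p) (mI p) + t%:C * Complex (q0 q) (mI q)).
apply: cP; rewrite /= ?mul0r ?subr0 ?addr0 ?mulr0 ?add0r ?sub0r ?mulrN ?opprK.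
  ring.
rewrite /U /L in hla; nra.
Qed.
End Real.

Section Transfer.
Variable R : rcfType.
Local Notation Q0 := (qzero R).
Implicit Types u x y ui uj a xi xj yi yj : quat R.
Ltac qsolve := repeat match goal with p : quat R |- _ => destruct p end;
  apply: quatP => /=; ring.

Lemma L1 u x : qmul (qconj (qmul (qconj u) x)) (qmul (qconj u) x) = qscale (nq u) (qmul (qconj x) x).
Proof. rewrite /nq; qsolve. Qed.
Lemma L3 u y : qmul (qconj (qmul u y)) (qmul u y) = qscale (nq u) (qmul (qconj y) y).
Proof. rewrite /nq; qsolve. Qed.
Lemma L4 ui uj a yi yj : qmul (qconj (qmul ui yi)) (qmul a (qmul uj yj)) =
  qmul (qconj yi) (qmul (qmul (qmul (qconj ui) a) uj) yj).
Proof. qsolve. Qed.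
Lemma L2 ui uj a xi xj :
  qmul (qconj (qmul (qconj ui) xi)) (qmul (qmul (qmul (qconj ui) a) uj) (qmul (qconj uj) xj))
  = qscale (nq ui * nq uj) (qmul (qconj xi) (qmul a xj)).
Proof. rewrite /nq; qsolve. Qed.

Lemma qscale1 (p : quat R) : qscale 1 p = p. Proof. by apply: quatP => /=; rewrite mul1r. Qed.

Lemma transfer n (A B : 'M[quat R]_n) (u : 'I_n -> quat R) :
  (forall i, nq (u i) = 1) ->
  (forall i j, B i j = qmul (qmul (qconj (u i)) (A i j)) (u j)) ->
  forall T, numrange A T <-> numrange B T.
Proof.
move=> hu hB T; split.
- move=> [x [hx hA]]; exists (fun i => qmul (qconj (u i)) (x i)); split.
    rewrite -hx /qdot; apply: eq_bigr => i _; by rewrite L1 hu qscale1.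
  rewrite -hA /qform; apply: eq_bigr => i _; apply: eq_bigr => j _.
  by rewrite hB L2 !hu mul1r qscale1.
- move=> [y [hy hBy]]; exists (fun i => qmul (u i) (y i)); split.
    rewrite -hy /qdot; apply: eq_bigr => i _; by rewrite L3 hu qscale1.
  rewrite -hBy /qform; apply: eq_bigr => i _; apply: eq_bigr => j _.
  by rewrite L4 hB.
Qed.
End Transfer.

Section Graph.
Variable R : rcfType.
Variable n : nat.
Variable N : 'M[quat R]_n.
Hypothesis hcf : cycle_free N.
Local Notation E := (mx_graph N).

Lemma Esym i j : E i j = E j i. Proof. by rewrite /mx_graph orbC. Qed.
Lemma Eirr i : E i i = false. Proof. by apply/negbTE; case: hcf. Qed.

Definition isleaf (S : {set 'I_n}) l k :=
  [/\ l \in S, k \in S, E l k & forall k', k' \in S -> E l k' -> k' = k].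

Lemma leaf_step (S : {set 'I_n}) x y s :
  uniq (x :: y :: s) -> path E x (y :: s) -> {subset x :: y :: s <= S} ->
  (exists l k, isleaf S l k) \/ (exists w, [/\ w \in S, w \notin x :: y :: s & E w x]).
Proof.
move=> hu hp hS.
case: (boolP [exists w, [&& w \in S, E x w & w != y]]) => [/existsP [w /and3P [wS xw wy]]|none].
  case: (boolP (w \in x :: y :: s)) => [win|wnin]; last first.
    by right; exists w; split => //; rewrite Esym.
  exfalso.
  have wx : w != x by apply: contraTneq xw => ->; rewrite Eirr.
  move: win; rewrite !inE (negbTE wx) (negbTE wy) /= => win.
  move: hu hp; case/splitPr: win => s1 s2 hu hp.
  have U : uniq (x :: y :: rcons s1 w).
    move: hu; rewrite -cats1 -[x :: y :: (s1 ++ w :: s2)]/((x :: y :: s1) ++ w :: s2).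
    rewrite -[x :: y :: (s1 ++ [:: w])]/((x :: y :: s1) ++ [:: w]).
    rewrite -[w :: s2]/([:: w] ++ s2) catA cat_uniq => /andP [-> _].
    done.
  have Sz : (3 <= size (x :: y :: rcons s1 w))%N by rewrite /= size_rcons.
  have := (proj2 hcf) _ U Sz; apply/negP; rewrite negbK.
  rewrite /cycle rcons_path /= last_rcons (Esym w x) xw andbT -cats1 cat_path /=.
  move: hp => /= /andP [-> ]; rewrite cat_path => /andP [-> /=] /andP [-> _].
  done.
left; exists x, y; split.
- by apply: hS; rewrite inE eqxx.
- by apply: hS; rewrite !inE eqxx orbT.
- by move: hp => /= /andP [].
move=> k' k'S xk'; apply/eqP; move/existsPn: none => /(_ k').
by rewrite k'S xk' /= negbK.
Qed.

Lemma leaf_aux (S : {set 'I_n}) m : forall x y s, (n - size (x :: y :: s) <= m)%N ->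
  uniq (x :: y :: s) -> path E x (y :: s) -> {subset x :: y :: s <= S} ->
  exists l k, isleaf S l k.
Proof.
elim: m => [|m IH] x y s hsz hu hp hS;
  (case: (leaf_step hu hp hS) => [//|[w [wS wn wx]]]);
  (have hu' : uniq (w :: x :: y :: s) by rewrite cons_uniq wn hu);
  (have hsz' : (size (w :: x :: y :: s) <= n)%N by
     (have := @uniq_leq_size _ _ (enum 'I_n) hu' (fun z _ => mem_enum _ z));
     rewrite size_enum_ord).
  by move: hsz hsz' => /=; lia.
apply: (IH w x (y :: s)) => //.
- by move: hsz hsz' => /=; lia.
- by apply/andP; split.
- by move=> z; rewrite inE => /orP [/eqP -> //|]; apply: hS.
Qed.

Lemma leaf (S : {set 'I_n}) i j : i \in S -> j \in S -> E i j ->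
  exists l k, isleaf S l k.
Proof.
move=> iS jS ij.
apply: (@leaf_aux S n i j [::]).
- by rewrite leq_subr.
- by rewrite /= inE andbT; apply: contraTneq ij => ->; rewrite Eirr.
- by rewrite /= ij.
- by move=> z; rewrite !inE => /orP [] /eqP ->.
Qed.

Hypothesis hsu : strictly_upper N.
Local Notation Q0 := (qzero R).
Definition isrealq (p : quat R) := p = qreal (q0 p).

Ltac qsolve := repeat match goal with p : quat R |- _ => destruct p end;
  apply: quatP => /=; ring.

Lemma G1 (s : R) (X Y : quat R) :
  qmul (qmul (qconj (qscale s (qmul X Y))) X) Y = qreal (s * nq (qmul X Y)).
Proof. rewrite /nq; qsolve. Qed.
Lemma G2 (s : R) (X Y : quat R) :
  qmul (qmul (qconj Y) X) (qscale s (qmul (qconj X) Y)) = qreal (s * nq (qmul (qconj X) Y)).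
Proof. rewrite /nq; qsolve. Qed.
Lemma G0l (a b : quat R) : qmul (qmul (qconj a) Q0) b = qreal 0.
Proof. qsolve. Qed.

Lemma noedge i j : ~~ E i j -> N i j = Q0.
Proof. by rewrite /mx_graph negb_or => /andP [/negPn /eqP]. Qed.

Lemma gauge_none (S : {set 'I_n}) :
  ~~ [exists i, exists j, [&& i \in S, j \in S & E i j]] ->
  exists u : 'I_n -> quat R, (forall i, nq (u i) = 1) /\
  (forall i j, i \in S -> j \in S -> isrealq (qmul (qmul (qconj (u i)) (N i j)) (u j))).
Proof.
move=> none; exists (fun=> qreal 1); split; first by move=> i; rewrite /nq /=; ring.
move=> i j iS jS.
move/existsPn: none => /(_ i) /existsPn /(_ j); rewrite iS jS /= => /noedge ->.
by rewrite /isrealq; qsolve.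
Qed.

Lemma gauge_set k : forall S : {set 'I_n}, (#|S| <= k)%N ->
  exists u : 'I_n -> quat R, (forall i, nq (u i) = 1) /\
  (forall i j, i \in S -> j \in S -> isrealq (qmul (qmul (qconj (u i)) (N i j)) (u j))).
Proof.
elim: k => [|k IH] S hS;
  (case: (boolP [exists i, exists j, [&& i \in S, j \in S & E i j]]) =>
    [/existsP [i0 /existsP [j0 /and3P [i0S j0S ij0]]]|none]);
  try exact: gauge_none.
  by exfalso; move: hS; rewrite leqn0 cards_eq0 => /eqP S0; rewrite S0 inE in i0S.
have [l [k0 [lS k0S lk0 lu]]] := leaf i0S j0S ij0.
have k0l : k0 != l by apply: contraTneq lk0 => ->; rewrite Eirr.
have [u [hu hr]] : exists u : 'I_n -> quat R, (forall i, nq (u i) = 1) /\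
  (forall i j, i \in S :\ l -> j \in S :\ l ->
     isrealq (qmul (qmul (qconj (u i)) (N i j)) (u j))).
  by apply: IH; move: hS; rewrite (cardsD1 l S) lS.
set c := qadd (N l k0) (qconj (N k0 l)).
set b := qmul c (u k0).
set s := (Num.sqrt (nq b))^-1.
have cne : c != Q0.
  have [lt|gt] := ltnP l k0.
    have e0 : N k0 l = Q0 by apply: hsu; rewrite ltnW.
    rewrite /c e0; move: lk0; rewrite /mx_graph e0 eqxx orbF.
    by apply: contraNneq => h; apply/eqP; rewrite -h; qsolve.
  have e0 : N l k0 = Q0 by apply: hsu.
  rewrite /c e0; move: lk0; rewrite /mx_graph e0 eqxx /=.
  apply: contraNneq => h; apply/eqP; rewrite -[N k0 l]qconjK.
  by move: h; rewrite qadd0 => ->; qsolve.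
have nb : 0 < nq b.
  rewrite /b nq_mul hu mulr1 lt_def nq_ge0 andbT.
  by apply: contraNneq cne => /nq_eq0 ->.
have ss : s * s * nq b = 1.
  rewrite /s -invrM ?unitfE ?sqrtr_eq0 -?ltNge // -expr2 sqr_sqrtr ?ltW //.
  by rewrite mulVf // gt_eqF.
pose v := qscale s b.
have nv : nq v = 1.
  rewrite -ss /v /nq /=; move: (s) => s0; ring.
exists (fun i => if i == l then v else u i); split.
  by move=> i; case: eqP.
have Sl : forall i, i \in S -> i != l -> i \in S :\ l.
  by move=> i iS il; rewrite !inE il.
have nl : forall i, i \in S -> i != k0 -> N l i = Q0 /\ N i l = Q0.
  move=> i iS ik; have : ~~ E l i by apply: contra ik => /(lu _ iS) ->.
  by move=> h; split; [exact: noedge | apply: noedge; rewrite Esym].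
move=> i j iS jS.
case: (eqVneq i l) => [il|il]; case: (eqVneq j l) => [jl|jl].
- subst; rewrite hsu // G0l /isrealq //.
- subst; case: (eqVneq j k0) => [jk|jk]; last first.
    by rewrite (nl _ jS jk).1 G0l.
  subst; have [lt|gt] := ltnP l k0.
    have e0 : N k0 l = Q0 by apply: hsu; rewrite ltnW.
    have eb : b = qmul (N l k0) (u k0) by rewrite /b /c e0; congr qmul; qsolve.
    by rewrite /v eb G1.
  have e0 : N l k0 = Q0 by apply: hsu.
  by rewrite e0 G0l.
- subst; case: (eqVneq i k0) => [ik|ik]; last first.
    by rewrite (nl _ iS ik).2 G0l.
  subst; have [lt|gt] := ltnP l k0.
    have e0 : N k0 l = Q0 by apply: hsu; rewrite ltnW.
    by rewrite e0 G0l.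
  have e0 : N l k0 = Q0 by apply: hsu.
  have eb : b = qmul (qconj (N k0 l)) (u k0) by rewrite /b /c e0 qadd0.
  by rewrite /v eb G2.
- exact: hr (Sl _ iS il) (Sl _ jS jl).
Qed.

Lemma gauge : exists u : 'I_n -> quat R, (forall i, nq (u i) = 1) /\
  (forall i j, isrealq (qmul (qmul (qconj (u i)) (N i j)) (u j))).
Proof.
have hT : (#|[set: 'I_n]| <= n)%N by rewrite cardsT card_ord.
have [u [hu hr]] := gauge_set hT.
by exists u; split => // i j; apply: hr; rewrite inE.
Qed.

End Graph.

Unset Implicit Arguments.

Theorem corollary4p3 (R : rcfType) (n : nat) (D N : 'M[quat R]_n) :
  real_diagonal D -> strictly_upper N -> cycle_free N ->
  qconvex (numrange (mx_add D N)).
Proof.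
move=> hD hsu hcf.
have [u [hu hr]] := gauge hcf hsu.
set A := mx_add D N.
pose B := \matrix_(i, j) qmul (qmul (qconj (u i)) (A i j)) (u j).
have hB : forall i j, B i j = qmul (qmul (qconj (u i)) (A i j)) (u j).
  by move=> i j; rewrite mxE.
have breal : forall i j, B i j = qreal (q0 (B i j)).
  move=> i j; rewrite hB /A mxE qmulDr qmulDl.
  have rD : isrealq (qmul (qmul (qconj (u i)) (D i j)) (u j)).
    rewrite hD; case: eqP => [<-|_].
      by rewrite /isrealq; apply: quatP => /=; ring.
    by rewrite /isrealq; apply: quatP => /=; ring.
  move: (hr i j) rD; rewrite /isrealq => -> ->.
  by apply: quatP => /=; ring.
have htr := transfer hu hB.
move=> p q t hp hq ht; apply/htr.
by apply: (W_real_convex breal) => //; apply/htr.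
Qed.
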